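(* Let $R$ be a commutative Noetherian local ring. Let $\mathcal{P} \subset R$ be a finite subset and let $\mathcal{P}_0, \mathcal{P}_1, \ldots, \mathcal{P}_r$ be subsets of $\mathcal{P}$; set $c_\ell = \#\mathcal{P}_\ell$ for all $\ell$ and $I = (\mathcal{P})$. Assume: (Ba1) $\mathcal{P} = \mathcal{P}_0 \cup \mathcal{P}_1 \cup \cdots \cup \mathcal{P}_r$; (Ba2) $\#\mathcal{P}_0 = 1$; (Ba3) for each $\ell$ with $0 < \ell \le r$ and $c_\ell \ge 2$, there exists an integer $n_\ell$ with $2 \le n_\ell \le c_\ell$ such that for arbitrary $n_\ell$ distinct elements $p_1, \ldots, p_{n_\ell} \in \mathcal{P}_\ell$ there exist an integer $\ell'$ with $0 \le \ell' < \ell$ and elements $p' \in \mathcal{P}_{\ell'}$, $b \in I^{n_\ell - 1}$ such that $p_1 p_2 \cdots p_{n_\ell} = p' b$. For $0 \le \ell \le r$ with $c_\ell = 1$, set $n_\ell = 2$. For each $\ell = 0, 1, \ldots, r$, let $A^{(\ell)} = (a^{(\ell)}_{ij})$ be an $(n_\ell - 1) \times c_\ell$ matrix with entries in $R$ such that all maximal minors of $A^{(\ell)}$ are units in $R$. Write $\mathcal{P}_\ell = \{p^{(\ell)}_1, \ldots, p^{(\ell)}_{c_\ell}\}$, and set $$g^{(\ell)}_i = \sum_{j=1}^{c_\ell} a^{(\ell)}_{ij} p^{(\ell)}_j \quad (1 \le i \le n_\ell - 1,\ 0 \le \ell \le r), \qquad J = (g^{(\ell)}_i : 0 \le \ell \le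 r,\ 1 \le i \le n_\ell - 1).$$ Then $J$ is a reduction of $I$.
   Context: An ideal $J \subseteq I$ is called a reduction of $I$ if there exists an integer $s \ge 1$ such that $I^{s+1} = J I^s$. *)

(* Defs.v *)
From HB Require Import structures.
From mathcomp Require Import all_boot all_order all_algebra.
Set Implicit Arguments. Unset Strict Implicit. Unset Printing Implicit Defensive.
Import GRing.Theory.
Local Open Scope ring_scope.

Section Ideals.
Variable R : comUnitRingType.

Definition is_ideal (I : R -> Prop) : Prop :=
  I 0 /\ (forall x y, I x -> I y -> I (x + y)) /\ (forall a x, I x -> I (a * x)).

Definition ideal_gen (S : R -> Prop) (x : R) : Prop :=
  exists (k : nat) (c g : 'I_k -> R),
    (forall i, S (g i)) /\ x = \sum_(i < k) c i * g i.

Definition ideal_mul (I J : R -> Prop) : R -> Prop :=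
  ideal_gen (fun x => exists a b, I a /\ J b /\ x = a * b).

Fixpoint ideal_exp (I : R -> Prop) (n : nat) : R -> Prop :=
  match n with
  | 0 => ideal_gen (fun x => x = 1)
  | n.+1 => ideal_mul (ideal_exp I n) I
  end.

Definition is_reduction (J I : R -> Prop) : Prop :=
  (forall x, J x -> I x) /\
  exists s : nat, (1 <= s)%N /\
    forall x, ideal_exp I s.+1 x <-> ideal_mul J (ideal_exp I s) x.

Definition noetherian : Prop :=
  forall I : R -> Prop, is_ideal I ->
    exists s : seq R, forall x, I x <-> ideal_gen (fun y => y \in s) x.

Definition maximal_ideal (M : R -> Prop) : Prop :=
  is_ideal M /\ ~ M 1 /\
  forall N : R -> Prop, is_ideal N -> (forall x, M x -> N x) ->
    (forall x, N x <-> M x) \/ N 1.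

Definition local_ring : Prop :=
  exists M : R -> Prop, maximal_ideal M /\
    forall N, maximal_ideal N -> forall x, N x <-> M x.

(* all maximal minors (determinants of the square submatrices obtained by
   choosing m columns in increasing order) of an m x c matrix are units *)
Definition maxminors_units (m c : nat) (A : 'M[R]_(m, c)) : Prop :=
  forall f : 'I_m -> 'I_c, (forall i j : 'I_m, i < j -> f i < f j)%N ->
    \det (colsub f A) \is a GRing.unit.

End Ideals.

(* Main.v *)
Require Import Defs.
From HB Require Import structures.
From mathcomp Require Import all_boot all_order all_algebra zify.
Import GRing.Theory.
Local Open Scope ring_scope.
Set Implicit Arguments. Unset Strict Implicit.

Section IdealLib.
Variable R : comUnitRingType.
Implicit Types (S T : R -> Prop).

Lemma gen_in S x : S x -> ideal_gen S x.
Proof. move=> Sx; exists 1%N, (fun _ => 1), (fun _ => x); split=> //.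
by rewrite big_ord1 mul1r. Qed.

Lemma gen0 S : ideal_gen S 0.
Proof. exists 0%N, (fun _ => 0), (fun _ => 0); split; first by case.
by rewrite big_ord0. Qed.

Lemma genD S x y : ideal_gen S x -> ideal_gen S y -> ideal_gen S (x + y).
Proof.
move=> [k1 [c1 [g1 [H1 ->]]]] [k2 [c2 [g2 [H2 ->]]]].
exists (k1 + k2)%N,
  (fun i => match split i with inl a => c1 a | inr b => c2 b end),
  (fun i => match split i with inl a => g1 a | inr b => g2 b end); split.
  by move=> i; case: (split i).
rewrite big_split_ord /=; congr (_ + _); apply: eq_bigr => i _.
  by rewrite (unsplitK (inl i)). by rewrite (unsplitK (inr i)).
Qed.

Lemma genM S a x : ideal_gen S x -> ideal_gen S (a * x).
Proof.
move=> [k [c [g [H ->]]]]; exists k, (fun i => a * c i), g; split=> //.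
rewrite big_distrr; apply: eq_bigr => i _; exact: mulrA.
Qed.

Lemma is_ideal_gen S : is_ideal (ideal_gen S).
Proof. split; first exact: gen0. split; [exact: genD | exact: genM]. Qed.

Lemma ideal_sum T (I : Type) (r : seq I) (P : pred I) (F : I -> R) :
  is_ideal T -> (forall i, P i -> T (F i)) -> T (\sum_(i <- r | P i) F i).
Proof.
move=> [T0 [TD TM]] H; apply: (big_ind T) => //.
Qed.

Lemma gen_min S T x : is_ideal T -> (forall y, S y -> T y) -> ideal_gen S x -> T x.
Proof.
move=> hT hS [k [c [g [H ->]]]]; apply: ideal_sum => // i _.
by case: hT => _ [_ TM]; apply: TM; apply: hS.
Qed.

Lemma ideal_pre T y : is_ideal T -> is_ideal (fun x => T (x * y)).
Proof.
move=> [T0 [TD TM]]; split; first by rewrite mul0r.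
split; first by move=> a b ha hb; rewrite mulrDl; apply: TD.
by move=> a b hb; rewrite -mulrA; apply: TM.
Qed.

Lemma ideal_all (Y : Type) (Q : Y -> Prop) (T : Y -> R -> Prop) :
  (forall y, Q y -> is_ideal (T y)) -> is_ideal (fun x => forall y, Q y -> T y x).
Proof.
move=> H; split; first by move=> y /H [].
split; first by move=> a b ha hb y qy; case: (H y qy) => _ [D _]; apply: D; auto.
by move=> a b hb y qy; case: (H y qy) => _ [_ M]; apply: M; auto.
Qed.

Lemma ideal_prel T x : is_ideal T -> is_ideal (fun y => T (x * y)).
Proof.
move=> [T0 [TD TM]]; split; first by rewrite mulr0.
split; first by move=> a b ha hb; rewrite mulrDr; apply: TD.
by move=> a b hb; rewrite mulrCA; apply: TM.
Qed.

Lemma gen_mul S1 S2 S3 a b : ideal_gen S1 a -> ideal_gen S2 b ->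
  (forall x y, S1 x -> S2 y -> ideal_gen S3 (x * y)) -> ideal_gen S3 (a * b).
Proof.
move=> ha hb H.
pose T := fun x => forall y, ideal_gen S2 y -> ideal_gen S3 (x * y).
have hT : is_ideal T.
  by apply: (@ideal_all _ (ideal_gen S2) (fun y x => ideal_gen S3 (x * y))) => y _;
     apply: ideal_pre; apply: is_ideal_gen.
have : T a.
  apply: (gen_min hT) ha => x S1x y hy.
  apply: (gen_min (ideal_prel x (is_ideal_gen S3))) hy => z S2z.
  exact: H.
by apply.
Qed.

Lemma is_ideal_mul (I J : R -> Prop) : is_ideal (ideal_mul I J).
Proof. exact: is_ideal_gen. Qed.

Lemma mul_in (I J : R -> Prop) a b : I a -> J b -> ideal_mul I J (a * b).
Proof. by move=> ha hb; apply: gen_in; exists a, b. Qed.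

Lemma mul_le (I J : R -> Prop) T x : is_ideal T ->
  (forall a b, I a -> J b -> T (a * b)) -> ideal_mul I J x -> T x.
Proof. move=> hT H; apply: gen_min => // y [a [b [ha [hb ->]]]]; exact: H. Qed.

Lemma is_ideal_exp (I : R -> Prop) k : is_ideal (ideal_exp I k).
Proof. by case: k => [|k]; apply: is_ideal_gen. Qed.

Lemma exp0_all (I : R -> Prop) x : ideal_exp I 0 x.
Proof. by rewrite -[x]mulr1; apply: genM; apply: gen_in. Qed.

Lemma exp1 (I : R -> Prop) x : I x -> ideal_exp I 1 x.
Proof. by move=> hx; rewrite -[x]mul1r; apply: mul_in => //; apply: exp0_all. Qed.

Lemma ideal_M T a x : is_ideal T -> T x -> T (a * x).
Proof. by move=> [_ [_ M]]; apply: M. Qed.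

Lemma ideal_Mr T a x : is_ideal T -> T x -> T (x * a).
Proof. by move=> hT hx; rewrite mulrC; apply: ideal_M. Qed.

Lemma expD (I : R -> Prop) a b x y : ideal_exp I a x -> ideal_exp I b y -> ideal_exp I (a + b) (x * y).
Proof.
move=> hx; elim: b y => [|b IH] y hy.
  by rewrite addn0; apply: ideal_Mr => //; apply: is_ideal_exp.
rewrite addnS /=.
apply: (mul_le (T := fun y => ideal_mul (ideal_exp I (a + b)) I (x * y))) hy.
  by apply: ideal_prel; apply: is_ideal_mul.
by move=> u v hu hv; rewrite mulrA; apply: mul_in => //; apply: IH.
Qed.

End IdealLib.


Section Good.
Variable R : comUnitRingType.
Variables (I J : R -> Prop).
Hypothesis hI : is_ideal I.
Hypothesis hJI : forall x, J x -> I x.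

Definition JI a := ideal_mul J (ideal_exp I a).

Lemma JIexp a b x y : JI a x -> ideal_exp I b y -> JI (a + b) (x * y).
Proof.
move=> hx hy; move: y hy.
apply: (mul_le (T := fun x => forall y, ideal_exp I b y -> JI (a + b) (x * y))) hx.
  apply: (ideal_all (Q := ideal_exp I b) (T := fun y x => JI (a + b) (x * y))) => y _.
  by apply: ideal_pre; apply: is_ideal_mul.
move=> u v hu hv y hy; rewrite -mulrA; apply: mul_in => //; exact: expD.
Qed.

Lemma JI_exp a x : JI a x -> ideal_exp I a.+1 x.
Proof.
apply: mul_le; first exact: is_ideal_exp.
by move=> u v hu hv; rewrite mulrC; apply: mul_in => //; apply: hJI.
Qed.

Lemma prod_exp (s : seq R) : (forall x, x \in s -> I x) ->
  ideal_exp I (size s) (\prod_(x <- s) x).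
Proof.
elim: s => [|y s IH] H; first exact: exp0_all.
rewrite big_cons (_ : size (y :: s) = 1 + size s)%N //; apply: expD; first by apply: exp1; apply: H; rewrite inE eqxx.
by apply: IH => x hx; apply: H; rewrite inE hx orbT.
Qed.

Definition goodK (Q : pred R) K :=
  forall s : seq R, size s = K.+1 -> all Q s -> JI K (\prod_(x <- s) x).

Definition Good (Q : pred R) := exists K, goodK Q K.

Lemma good_up (Q : pred R) K K' : (forall x, Q x -> I x) ->
  goodK Q K -> (K <= K')%N -> goodK Q K'.
Proof.
move=> QI hK le s hs hQ.
rewrite -(cat_take_drop K.+1 s) big_cat /=.
have -> : K' = (K + (K' - K))%N by rewrite subnKC.
have hall := hQ; rewrite -(cat_take_drop K.+1 s) all_cat in hall.
case/andP: hall => h1 h2.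
apply: JIexp; first by apply: hK => //; rewrite size_takel // hs ltnS.
have -> : (K' - K)%N = size (drop K.+1 s) by rewrite size_drop hs subSS.
apply: prod_exp => x hx; apply: QI; exact: (allP h2).
Qed.

Lemma good_sub (Q1 Q2 : pred R) : (forall x, Q1 x -> Q2 x) -> Good Q2 -> Good Q1.
Proof.
move=> H [K hK]; exists K => s hs hQ; apply: hK => //.
by apply/allP => x hx; apply: H; apply: (allP hQ).
Qed.

Lemma good_U (Q1 Q2 : pred R) : (forall x, Q1 x -> I x) -> (forall x, Q2 x -> I x) ->
  Good Q1 -> Good Q2 -> Good (predU Q1 Q2).
Proof.
move=> QI1 QI2 [K1 h1] [K2 h2]; exists (K1 + K2)%N => s hs hQ.
rewrite -(perm_big _ (permEl (perm_filterC Q1 s))) big_cat /=.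
have hc := count_predC Q1 s.
have hA : all Q1 (filter Q1 s) by apply: filter_all.
have hB : all Q2 (filter (predC Q1) s).
  apply/allP => x; rewrite mem_filter => /andP [nx xs].
  by have := allP hQ x xs; rewrite /= (negbTE nx).
rewrite hs in hc.
have hsz := size_filter Q1 s; have hsz' := size_filter (predC Q1) s.
case: (leqP K1.+1 (count Q1 s)) => hc1.
  have e : (K1 + K2 = (count Q1 s).-1 + size (filter (predC Q1) s))%N by lia.
  rewrite e; apply: JIexp.
    apply: (good_up QI1 h1) => //; last by lia.
    lia.
  apply: prod_exp => x; rewrite mem_filter => /andP [_ xs].
  by have := allP hQ x xs => /orP [/QI1|/QI2].
have e : (K1 + K2 = size (filter Q1 s) + (count (predC Q1) s).-1)%N by lia.
rewrite mulrC e addnC; apply: JIexp.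
  apply: (good_up QI2 h2) => //; last by lia.
  lia.
apply: prod_exp => x; rewrite mem_filter => /andP [_ xs].
by have := allP hQ x xs => /orP [/QI1|/QI2].
Qed.

End Good.


Section LA.
Variable R : comUnitRingType.

Lemma LA (m c : nat) (A : 'M[R]_(m, c)) (f : 'I_m -> 'I_c) (X : 'I_c -> R) :
  injective f -> colsub f A \in unitmx -> forall i0,
  X (f i0) = \sum_t (invmx (colsub f A)) i0 t * (\sum_k A t k * X k)
     - \sum_(k | k \notin codom f) (invmx (colsub f A) *m A) i0 k * X k.
Proof.
move=> finj Bu i0; set B := colsub f A; set C := invmx B *m A.
have E1 : \sum_t (invmx B) i0 t * (\sum_k A t k * X k) = \sum_k C i0 k * X k.
  under eq_bigr => t _ do rewrite big_distrr.
  rewrite exchange_big /=; apply: eq_bigr => k _.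
  rewrite /C mxE big_distrl /=; apply: eq_bigr => t _; exact: mulrA.
rewrite E1 (bigID (fun k => k \in codom f)) /= addrK.
have hu : uniq (codom f) by rewrite map_inj_uniq // enum_uniq.
rewrite -big_uniq //= big_image /=.
rewrite (bigD1 i0) //= big1 ?addr0.
  have -> : C i0 (f i0) = (invmx B *m B) i0 i0 by rewrite !mxE; apply: eq_bigr => t _; rewrite mxE.
  by rewrite mulVmx // mxE eqxx mul1r.
move=> i ne.
have -> : C i0 (f i) = (invmx B *m B) i0 i by rewrite !mxE; apply: eq_bigr => t _; rewrite mxE.
by rewrite mulVmx // mxE eq_sym (negbTE ne) mul0r.
Qed.

End LA.

Lemma extend_set (c : nat) d (A : {set 'I_c}) : (#|A| + d <= c)%N ->
  exists T : {set 'I_c}, A \subset T /\ #|T| = (#|A| + d)%N.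
Proof.
elim: d A => [|d IH] A h; first by exists A; rewrite addn0 subxx.
have hC := cardsC A; rewrite card_ord in hC.
have : (0 < #|~: A|)%N by lia.
case/card_gt0P => x; rewrite in_setC => xA.
have hx : #|x |: A| = (#|A|).+1 by rewrite cardsU1 xA.
have [T [sT cT]] := IH (x |: A) ltac:(lia).
exists T; split; last by rewrite cT hx; lia.
by apply: subset_trans sT; apply: subsetUr.
Qed.

Lemma sorted_enum_set (c : nat) (T : {set 'I_c}) :
  sorted (fun a b : 'I_c => (a < b)%N) (enum T).
Proof.
have h : sorted (fun a b : 'I_c => (a < b)%N) (enum 'I_c).
  by have := iota_ltn_sorted 0 c; rewrite -val_enum_ord sorted_map.
rewrite /enum_mem -enumT; apply: sorted_filter => //.
by move=> a b d; apply: ltn_trans.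
Qed.

Lemma exists_incr (c m : nat) (j0 : 'I_c) (S : pred 'I_c) :
  (#|S| <= m)%N -> (m <= c)%N ->
  exists f : 'I_m -> 'I_c, (forall i i' : 'I_m, (i < i')%N -> (f i < f i')%N) /\
    forall x, S x -> x \in codom f.
Proof.
move=> h1 h2.
have cS : #|[set x | S x]| = #|S| by apply: eq_card => x; rewrite inE.
have [T [sT cT]] := @extend_set c (m - #|S|) [set x | S x] ltac:(rewrite cS; lia).
rewrite cS subnKC // in cT.
pose f := fun i : 'I_m => nth j0 (enum T) i.
have hsz : size (enum T) = m by rewrite -cardE.
exists f; split.
  move=> i i' lt; rewrite /f.
  apply: (sorted_ltn_nth (leT := fun a b : 'I_c => (a < b)%N)) => //.
  - by move=> a b d; apply: ltn_trans.
  - exact: sorted_enum_set.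
  - by rewrite inE hsz.
  - by rewrite inE hsz.
move=> x Sx.
have xT : x \in enum T by rewrite mem_enum; apply: (subsetP sT); rewrite inE.
have hi : (index x (enum T) < m)%N by rewrite -hsz index_mem.
apply/codomP; exists (Ordinal hi); rewrite /f /= nth_index //.
Qed.


Lemma notuniq_split (T : eqType) (s : seq T) : ~~ uniq s ->
  exists j s', perm_eq s (j :: s') /\ j \in s'.
Proof.
elim: s => [|x s IH] //=; rewrite negb_and negbK; case/orP => [xs|nu].
  by exists x, s; rewrite perm_refl.
have [j [s1 [p js1]]] := IH nu.
exists j, (x :: s1); split; last by rewrite inE js1 orbT.
apply: perm_trans (_ : perm_eq (x :: j :: s1) _).
  by rewrite perm_cons.
by rewrite (perm_catCA [:: x] [:: j] s1).
Qed.

Lemma seq_index (R : eqType) (x0 : R) (X s : seq R) : all (mem X) s ->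
  exists js : seq 'I_(size X), s = map (fun j : 'I_(size X) => nth x0 X j) js.
Proof.
elim: s => [|x s IH] /=; first by exists [::].
case/andP => xX /IH [js ->].
have hi : (index x X < size X)%N by rewrite index_mem.
by exists (Ordinal hi :: js); rewrite /= nth_index.
Qed.

Section Level.
Variable R : comUnitRingType.
Variables (I J : R -> Prop).
Hypothesis hI : is_ideal I.
Hypothesis hJ : is_ideal J.
Hypothesis hJI : forall x, J x -> I x.
Variables (X : seq R) (Ql : pred R) (n : nat).
Hypothesis Xuniq : uniq X.
Hypothesis XI : forall x, x \in X -> I x.
Hypothesis QlI : forall x, Ql x -> I x.
Hypothesis hn2 : (2 <= n)%N.
Hypothesis hnc : (n <= size X)%N.
Variable A : 'M[R]_(n.-1, size X).
Hypothesis HA : maxminors_units A.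
Hypothesis HJg : forall t, J (\sum_(j < size X) A t j * X`_j).
Hypothesis HBa : forall q : 'I_n -> R, injective q -> (forall i, q i \in X) ->
  exists p' b, Ql p' /\ ideal_exp I n.-1 b /\ \prod_(i < n) q i = p' * b.

Definition Tn := ideal_gen (fun x => JI I J n.-1 x \/
   exists q y, Ql q /\ ideal_exp I n.-1 y /\ x = q * y).

Lemma Tn_ideal : is_ideal Tn.
Proof. exact: is_ideal_gen. Qed.

Lemma XnthI (j : 'I_(size X)) : I X`_j.
Proof. by apply: XI; apply: mem_nth. Qed.

Lemma prodX_exp (s : seq 'I_(size X)) :
  ideal_exp I (size s) (\prod_(j <- s) X`_j).
Proof.
have -> : \prod_(j <- s) X`_j = \prod_(x <- map (fun j : 'I_(size X) => X`_j) s) x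
  by rewrite big_map.
rewrite -(size_map (fun j : 'I_(size X) => X`_j)).
apply: prod_exp => x /mapP [j _ ->]; exact: XnthI.
Qed.

Lemma LL_base (js : seq 'I_(size X)) : size js = n -> (n <= #|js|)%N ->
  Tn (\prod_(j <- js) X`_j).
Proof.
move=> hs hc.
have ujs : uniq js by apply/card_uniqP; apply/eqP; rewrite eqn_leq card_size hs hc.
have c0 : (0 < size X)%N by lia.
pose j0 := Ordinal c0.
pose q := fun i : 'I_n => X`_(nth j0 js i).
have qinj : injective q.
  move=> i i' /eqP; rewrite /q nth_uniq // => /eqP e.
  apply: ord_inj; apply/eqP; rewrite -(nth_uniq j0 _ _ ujs) ?hs //.
  by apply/eqP; apply: ord_inj.
have [p' [b [Qp [hb he]]]] := HBa qinj (fun i => mem_nth 0 (ltn_ord _)).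
have -> : \prod_(j <- js) X`_j = \prod_(i < n) q i.
  by rewrite (big_nth j0) hs big_mkord.
by rewrite he; apply: gen_in; right; exists p', b.
Qed.

Lemma Tn_opp x : Tn x -> Tn (- x).
Proof. by move=> h; rewrite -mulN1r; apply: genM. Qed.

Lemma LL u : forall js : seq 'I_(size X), size js = n -> (n <= #|js| + u)%N ->
  Tn (\prod_(j <- js) X`_j).
Proof.
elim: u => [|u IH] js hs hc; first by apply: LL_base => //; rewrite addn0 in hc.
case: (leqP n (#|js| + u)) => hcu; first exact: IH.
have hlt : (#|js| < n)%N by lia.
have nu : ~~ uniq js.
  by apply/negP => /card_uniqP e; rewrite e hs ltnn in hlt.
have [j [s' [pj js']]] := notuniq_split nu.
have c0 : (0 < size X)%N by lia.
have h1 : (#|js| <= n.-1)%N by lia.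
have [f [fincr fcod]] := @exists_incr (size X) n.-1 (Ordinal c0) (mem js)
   h1 ltac:(lia).
have finj : injective f.
  move=> i i' e; apply: ord_inj; case: (ltngtP i i') => // h.
  - by have := fincr _ _ h; rewrite e ltnn.
  - by have := fincr _ _ h; rewrite e ltnn.
have Bu : colsub f A \in unitmx by rewrite unitmxE; apply: HA.
have jin : j \in js by rewrite (perm_mem pj) inE eqxx.
have jcod : j \in codom f by apply: fcod; exact: jin.
case/codomP: jcod => i0 ej.
have hLA := LA (fun k => X`_k) finj Bu i0.
rewrite -ej in hLA.
have ss : size s' = n.-1 by have := perm_size pj; rewrite hs /=; lia.
have mems : forall x, (x \in s') = (x \in js).
  by move=> x; rewrite (perm_mem pj) inE; case: eqP => // ->; rewrite js'.
rewrite (perm_big _ pj) big_cons /= hLA mulrBl; apply: genD; last first.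
  apply: Tn_opp; rewrite big_distrl /=.
  apply: ideal_sum; first exact: Tn_ideal. move=> k kf.
  rewrite -mulrA; apply: genM.
  have -> : X`_k * \prod_(j <- s') X`_j = \prod_(j <- k :: s') X`_j by rewrite big_cons.
  apply: IH => //; first by rewrite /= ss; lia.
  have kn : k \notin s'.
    by apply/negP; rewrite mems => /fcod; rewrite (negbTE kf).
  have -> : #|k :: s'| = (#|s'|).+1.
    by rewrite (eq_card (B := [predU1 k & s'])) ?cardU1 ?kn // => x; rewrite !inE.
  have -> : #|s'| = #|js| by apply: eq_card => x; rewrite mems.
  lia.
apply: gen_in; left; apply: mul_in.
  apply: ideal_sum => // t _; apply: ideal_M => //; exact: HJg.
by rewrite -ss; apply: prodX_exp.
Qed.

Lemma LLs (s : seq R) : size s = n -> all (mem X) s -> Tn (\prod_(x <- s) x).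
Proof.
move=> hs hX; have [js ejs] := seq_index 0 hX.
rewrite ejs big_map; rewrite ejs size_map in hs.
by apply: (LL (u := n)) => //; lia.
Qed.

Definition Uk k := ideal_gen (fun x => JI I J (n * k.+1).-1 x \/
   exists s y, size s = k.+1 /\ all Ql s /\ ideal_exp I ((n.-1) * k.+1) y /\
      x = (\prod_(z <- s) z) * y).

Lemma Uk_exp k x : Uk k x -> ideal_exp I (n * k.+1) x.
Proof.
apply: gen_min; first exact: is_ideal_exp.
move=> y [h|[s [z [hs [hQ [hz ->]]]]]].
  have -> : (n * k.+1 = (n * k.+1).-1.+1)%N by rewrite prednK // muln_gt0; lia.
  exact: (JI_exp hJI).
have -> : (n * k.+1 = size s + n.-1 * k.+1)%N by rewrite hs; nia.
apply: expD => //; apply: prod_exp => w ws; apply: QlI; exact: (allP hQ).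
Qed.

Lemma Tn_exp x : Tn x -> ideal_exp I n x.
Proof.
apply: gen_min; first exact: is_ideal_exp.
move=> y [h|[q [z [hq [hz ->]]]]].
  have -> : n = n.-1.+1 by lia.
  exact: (JI_exp hJI).
have -> : n = (1 + n.-1)%N by lia.
by apply: expD => //; apply: exp1; apply: QlI.
Qed.

Lemma Rk k s : size s = (n * k.+1)%N -> all (mem X) s -> Uk k (\prod_(x <- s) x).
Proof.
elim: k s => [|k IH] s hs hX.
  have hT := LLs (s := s) ltac:(by rewrite hs muln1) hX.
  apply: (gen_min (is_ideal_gen _)) hT => y [h|[q [z [hq [hz ->]]]]].
    by apply: gen_in; left; rewrite muln1.
  apply: gen_in; right; exists [:: q], z; rewrite big_seq1 muln1 /=.
  by rewrite andbT.
rewrite -(cat_take_drop n s) big_cat /=.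
have hX2 := hX; rewrite -(cat_take_drop n s) all_cat in hX2.
case/andP: hX2 => hX1 hX2.
have hT := LLs (s := take n s) ltac:(rewrite size_takel // hs; nia) hX1.
have hU := IH (drop n s) ltac:(rewrite size_drop; nia) hX2.
apply: (gen_mul hT hU) => x y hx hy.
case: hx => [hx|[q [z [hq [hz ->]]]]].
  apply: gen_in; left.
  have -> : ((n * k.+2).-1 = n.-1 + n * k.+1)%N by nia.
  by apply: JIexp; last by apply: Uk_exp; apply: gen_in.
case: hy => [hy|[s1 [z1 [hs1 [hQ1 [hz1 ->]]]]]].
  apply: gen_in; left; rewrite mulrC.
  have -> : ((n * k.+2).-1 = (n * k.+1).-1 + n)%N by nia.
  apply: JIexp => //; apply: Tn_exp; apply: gen_in; right; exists q, z; done.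
apply: gen_in; right; exists (q :: s1), (z * z1); split; first by rewrite /= hs1.
split; first by rewrite /= hq.
have -> : (n.-1 * k.+2 = n.-1 + n.-1 * k.+1)%N by nia.
split; first by apply: expD.
by rewrite big_cons /=; rewrite -!mulrA; congr (_ * _); rewrite mulrCA.
Qed.

Lemma level_good : Good I J Ql -> Good I J (mem X).
Proof.
move=> [K hK]; exists (n * K.+1).-1 => s hs hX.
have hs' : size s = (n * K.+1)%N by rewrite hs prednK // muln_gt0; lia.
have hU := Rk hs' hX.
apply: (gen_min (is_ideal_mul _ _)) hU => y [h|[s1 [z [hs1 [hQ [hz ->]]]]]] //.
have -> : ((n * K.+1).-1 = K + n.-1 * K.+1)%N by nia.
by apply: JIexp => //; apply: hK.
Qed.

End Level.


Lemma expMon (R : comUnitRingType) (Q : pred R) k x :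
  ideal_exp (ideal_gen (fun y => Q y)) k x ->
  ideal_gen (fun y => exists s, size s = k /\ all Q s /\ y = \prod_(z <- s) z) x.
Proof.
elim: k x => [|k IH] x /=.
  apply: gen_min; first exact: is_ideal_gen.
  by move=> y ->; apply: gen_in; exists [::]; rewrite big_nil.
apply: mul_le; first exact: is_ideal_gen.
move=> a b ha hb; apply: (gen_mul (IH _ ha) hb) => u v [s [hs [hQ ->]]] hv.
apply: gen_in; exists (v :: s); split; first by rewrite /= hs.
by rewrite /= hv hQ big_cons /= mulrC.
Qed.

Unset Implicit Arguments. Set Strict Implicit.

Theorem theorem2p5 (R : comUnitRingType)
  (HnoethR : noetherian R) (HlocR : local_ring R)
  (r : nat) (P : seq R) (Pl : 'I_r.+1 -> seq R)
  (HPuniq : uniq P) (HPluniq : forall l, uniq (Pl l))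
  (HPlsub : forall l x, x \in Pl l -> x \in P)
  (* (Ba1) *)
  (HBa1 : forall x, x \in P -> exists l, x \in Pl l)
  (* (Ba2) *)
  (HBa2 : size (Pl ord0) = 1%N)
  (n : 'I_r.+1 -> nat)
  (Hn1 : forall l, size (Pl l) = 1%N -> n l = 2%N)
  (* (Ba3) *)
  (HBa3 : forall l : 'I_r.+1, (0 < l)%N -> (2 <= size (Pl l))%N ->
     [/\ (2 <= n l)%N, (n l <= size (Pl l))%N &
      forall q : 'I_(n l) -> R, injective q -> (forall i, q i \in Pl l) ->
        exists (l' : 'I_r.+1) (p' b : R),
          [/\ (l' < l)%N, p' \in Pl l',
              ideal_exp (ideal_gen (fun y => y \in P)) (n l).-1 b &
              \prod_(i < n l) q i = p' * b]])
  (A : forall l : 'I_r.+1, 'M[R]_((n l).-1, size (Pl l)))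
  (HA : forall l, maxminors_units (A l)) :
  let I := ideal_gen (fun y => y \in P) in
  let g := fun (l : 'I_r.+1) (i : 'I_(n l).-1) =>
             \sum_(j < size (Pl l)) A l i j * (Pl l)`_j in
  let J := ideal_gen (fun x => exists (l : 'I_r.+1) (i : 'I_(n l).-1), x = g l i) in
  is_reduction J I.
Proof.
move=> I g J.
have hI : is_ideal I by exact: is_ideal_gen.
have hJ : is_ideal J by exact: is_ideal_gen.
have PI : forall x, x \in P -> I x by move=> x hx; apply: gen_in.
have PlI : forall l x, x \in Pl l -> I x by move=> l x hx; apply: PI; apply: (HPlsub l).
have hJI : forall x, J x -> I x.
  move=> x hx; apply: (gen_min hI _ hx) => y [l [i ->]]; rewrite /g.
  apply: ideal_sum => // j _; apply: ideal_M => //; apply: (PlI l); apply: mem_nth.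
  exact: ltn_ord.
pose Q := fun k : nat => (fun x => [exists l' : 'I_r.+1, (l' < k)%N && (x \in Pl l')]) : pred R.
have QI : forall k x, Q k x -> I x by move=> k x /existsP [l' /andP [_ h]]; apply: (PlI l').
have lev : forall l : 'I_r.+1, Good I J (Q l) -> Good I J (mem (Pl l)).
  move=> l hQ.
  case: (ltngtP (size (Pl l)) 1) => hsz.
  - exists 0%N => s hs hX; exfalso; case: s hs hX => [|x [|]] //= _.
    by rewrite andbT; case: (Pl l) hsz.
  - have l0 : (0 < l)%N.
      case: (posnP l) => // e; have el : l = ord0 by apply: ord_inj.
      by rewrite el HBa2 in hsz.
    have [hn2 hnc HB] := HBa3 l l0 hsz.
    apply: (@level_good R I J hJ hJI (Pl l) (Q l) (n l) (HPluniq l) (PlI l) (QI l) hn2 hnc (A l) (HA l)) => //.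
    + by move=> t; apply: gen_in; exists l, t.
    + move=> q qinj qX; have [l' [p' [b [lt p'l hb he]]]] := HB q qinj qX.
      exists p', b; split => //; apply/existsP; exists l'; rewrite lt p'l.
      done.
  - have hn : n l = 2%N by apply: Hn1.
    have c0 : (0 < size (Pl l))%N by rewrite hsz.
    have m0 : (0 < (n l).-1)%N by rewrite hn.
    pose f := fun _ : 'I_(n l).-1 => Ordinal c0.
    have finj : injective f.
      by move=> i i' _; apply: ord_inj; have := ltn_ord i; have := ltn_ord i'; lia.
    have Bu : colsub f (A l) \in unitmx.
      rewrite unitmxE; apply: HA => i i' lt.
      by have := ltn_ord i'; have := ltn_ord i; lia.
    have hLA := LA (fun k => (Pl l)`_k) finj Bu (Ordinal m0).
    rewrite [X in _ - X]big1 ?subr0 /= in hLA; last first.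
      move=> k /negP []; apply/codomP; exists (Ordinal m0).
      by apply: ord_inj; have := ltn_ord k; rewrite /=; lia.
    have pJ : J (Pl l)`_0.
      rewrite hLA; apply: ideal_sum => // t _; apply: ideal_M => //.
      by apply: gen_in; exists l, t.
    exists 0%N => s hs hX; case: s hs hX => [|x [|]] //= _; rewrite andbT => xX.
    have ex : x = (Pl l)`_0.
      by move: xX hsz; case: (Pl l) => [|y [|]] //=; rewrite inE => /eqP.
    rewrite big_seq1 -[x]mulr1; apply: mul_in; first by rewrite ex.
    exact: exp0_all.
have allg : forall k, (k <= r.+1)%N -> Good I J (Q k).
  elim=> [|k IH] hk.
    exists 0%N => s hs hX; exfalso; case: s hs hX => [|x [|]] //= _.
    by rewrite andbT => /existsP [l' /andP []].
  pose l := Ordinal hk.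
  have hQk : Good I J (Q l) by apply: IH; lia.
  have := good_U (QI k) (fun x => PlI l x) hQk (lev l hQk).
  apply: good_sub => x /existsP [l' /andP [lt xl]].
  case: (ltngtP l' k) => h.
  - by apply/orP; left; apply/existsP; exists l'; rewrite h.
  - lia.
  - have el : l' = l by apply: ord_inj.
    by apply/orP; right; rewrite -el.
have [K hK] : Good I J (fun x => x \in P).
  have := allg r.+1 (leqnn _).
  apply: good_sub => x xP; have [l xl] := HBa1 x xP.
  by apply/existsP; exists l; rewrite ltn_ord.
split => //; exists K.+1; split => // x; split.
  move=> hx; have := expMon (Q := fun y => y \in P) hx.
  apply: gen_min; first exact: is_ideal_mul.
  move=> y [s [hs [hP ->]]].
  by apply: (good_up (fun x => PI x) hK (leqnSn K)).
exact: (JI_exp hJI).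
Qed.
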